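(* Let $n\ge2$ and let $r_1,\ldots,r_{n-1}$ be positive reals with $r_i>\sum_{j>i}r_j$ for each $i$. For $\overline\theta=(\theta_1,\ldots,\theta_{n-1})$, $\theta_i\in\mathbb{R}/2\pi$, define $w_n=r_{n-1}$, $w_i=r_{i-1}+w_{i+1}\cos\theta_i$ for $1<i\le n-1$, $x_i=w_i\sin\theta_{i-1}$ for $1<i\le n$, and $x_1=w_2\cos\theta_1$. Then $\overline\theta\mapsto(x_1(\overline\theta),\ldots,x_n(\overline\theta))$ is an embedding of the torus $T^{n-1}$ in $\mathbb{R}^n$ satisfying $x_1(-\overline\theta)=x_1(\overline\theta)$ and $x_i(-\overline\theta)=-x_i(\overline\theta)$ for $2\le i\le n$. *)

(* Defs.v *)
From Stdlib Require Import Reals Lra Lia List ZArith.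
Import ListNotations.
Open Scope R_scope.

(* Indices follow the paper: r_1..r_{n-1}, theta_1..theta_{n-1}, x_1..x_n.
   Sequences are functions nat -> R; values at other indices are irrelevant. *)

(* wfrom r th n k = w_{n-k}:  w_n = r_{n-1},
   w_i = r_{i-1} + w_{i+1} cos theta_i. *)
Fixpoint wfrom (r th : nat -> R) (n k : nat) : R :=
  match k with
  | O => r (n - 1)%nat
  | S k' => r (n - k' - 2)%nat + wfrom r th n k' * cos (th (n - k' - 1)%nat)
  end.

Definition w (r th : nat -> R) (n i : nat) : R := wfrom r th n (n - i).

Definition xcoord (r th : nat -> R) (n i : nat) : R :=
  if Nat.eqb i 1 then w r th n 2 * cos (th 1%nat)
  else w r th n i * sin (th (i - 1)%nat).

Definition tail_sum (r : nat -> R) (n i : nat) : R :=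
  fold_right Rplus 0 (map r (seq (S i) (n - 1 - i))).

Definition upd (th : nat -> R) (i : nat) (t : R) : nat -> R :=
  fun j => if Nat.eqb j i then t else th j.

(* Main.v *)
Require Import Defs.
From Stdlib Require Import Reals Lra Lia List ZArith FunctionalExtensionality.
Open Scope R_scope.

Lemma Rabs_sin_le x : Rabs (sin x) <= Rabs x.
Proof.
  assert (H: forall y, 0 <= y -> Rabs (sin y) <= y).
  { intros y Hy. destruct (Rle_lt_dec 1 y) as [H1|H1].
    - pose proof (SIN_bound y). apply Rabs_le. lra.
    - destruct (Req_dec y 0) as [->|H0].
      + rewrite sin_0, Rabs_R0. lra.
      + assert (0 < sin y). { apply sin_gt_0; pose proof PI2_1; lra. }
        pose proof (sin_lt_x y ltac:(lra)). rewrite Rabs_right; lra. }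
  destruct (Rle_dec 0 x).
  - rewrite (Rabs_right x) by lra. apply H; lra.
  - rewrite <- (Ropp_involutive x), sin_neg, Rabs_Ropp, Rabs_Ropp.
    rewrite (Rabs_right (-x)) by lra. apply H; lra.
Qed.

Lemma cos_lip a b : Rabs (cos a - cos b) <= Rabs (a - b).
Proof.
  rewrite form2, !Rabs_mult.
  pose proof (Rabs_sin_le ((a-b)/2)). pose proof (SIN_bound ((a+b)/2)).
  assert (Rabs (sin ((a+b)/2)) <= 1) by (apply Rabs_le; lra).
  assert (Rabs ((a-b)/2) = Rabs (a-b) / 2).
  { unfold Rdiv. rewrite Rabs_mult, (Rabs_right (/2)) by lra. reflexivity. }
  assert (Hm2: Rabs (-2) = 2) by (rewrite Rabs_left; lra). rewrite Hm2.
  pose proof (Rabs_pos (sin ((a - b) / 2))). pose proof (Rabs_pos (sin ((a + b) / 2))).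
  nra.
Qed.

Lemma sin_lip a b : Rabs (sin a - sin b) <= Rabs (a - b).
Proof.
  rewrite form4, !Rabs_mult.
  pose proof (Rabs_sin_le ((a-b)/2)). pose proof (COS_bound ((a+b)/2)).
  assert (Rabs (cos ((a+b)/2)) <= 1) by (apply Rabs_le; lra).
  assert (Rabs ((a-b)/2) = Rabs (a-b) / 2).
  { unfold Rdiv. rewrite Rabs_mult, (Rabs_right (/2)) by lra. reflexivity. }
  rewrite (Rabs_right 2) by lra.
  pose proof (Rabs_pos (sin ((a - b) / 2))). pose proof (Rabs_pos (cos ((a + b) / 2))).
  nra.
Qed.

Lemma polar a a' t t' : 0 < a -> 0 < a' -> a * cos t = a' * cos t' -> a * sin t = a' * sin t' ->
  a = a' /\ exists k : Z, t' = t + 2 * IZR k * PI.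
Proof.
  intros ha ha' hc hs.
  pose proof (sin2_cos2 t) as e1. pose proof (sin2_cos2 t') as e2. unfold Rsqr in *.
  assert (a * a = a' * a').
  { transitivity ((a*sin t)*(a*sin t) + (a*cos t)*(a*cos t)).
    - transitivity (a*a*(sin t * sin t + cos t * cos t)); [rewrite e1|]; ring.
    - rewrite hc, hs. transitivity (a'*a'*(sin t' * sin t' + cos t' * cos t')); [|rewrite e2]; ring. }
  assert (a = a') by nra. subst a'. split; [reflexivity|].
  assert (Hc: cos t = cos t') by (apply Rmult_eq_reg_l with a; lra).
  assert (Hs: sin t = sin t') by (apply Rmult_eq_reg_l with a; lra).
  assert (hd: cos (t' - t) = 1) by (rewrite cos_minus, <- Hc, <- Hs; lra).
  replace (t' - t) with (2 * ((t' - t)/2)) in hd by field.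
  rewrite cos_2a_sin in hd.
  assert (Hz: sin ((t'-t)/2) = 0) by nra.
  destruct (sin_eq_0_0 _ Hz) as [k hk]. exists k. lra.
Qed.

Definition ind (j k : nat) : R := if Nat.eqb k j then 1 else 0.

Fixpoint dwf (r th : nat -> R) (n j k : nat) : R :=
  match k with
  | O => 0
  | S k' => dwf r th n j k' * cos (th (n - k' - 1)%nat)
            + wfrom r th n k' * (- sin (th (n - k' - 1)%nat) * ind j (n - k' - 1))
  end.

Definition dw r th n j i := dwf r th n j (n - i).

Definition dx r th n j i : R :=
  if Nat.eqb i 1 then dw r th n j 2 * cos (th 1%nat) + w r th n 2 * (- sin (th 1%nat) * ind j 1)
  else dw r th n j i * sin (th (i - 1)%nat) + w r th n i * (cos (th (i-1)%nat) * ind j (i - 1)).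

Lemma upd_same th j : upd th j (th j) = th.
Proof. apply functional_extensionality; intro m. unfold upd.
  destruct (Nat.eqb m j) eqn:E; [apply Nat.eqb_eq in E; subst|]; reflexivity. Qed.

Lemma d_cos_upd th j m : derivable_pt_lim (fun t => cos (upd th j t m)) (th j) (- sin (th m) * ind j m).
Proof.
  unfold upd, ind. destruct (Nat.eqb m j) eqn:E.
  - apply Nat.eqb_eq in E; subst. rewrite Rmult_1_r. apply derivable_pt_lim_cos.
  - rewrite Rmult_0_r. apply derivable_pt_lim_const.
Qed.

Lemma d_sin_upd th j m : derivable_pt_lim (fun t => sin (upd th j t m)) (th j) (cos (th m) * ind j m).
Proof.
  unfold upd, ind. destruct (Nat.eqb m j) eqn:E.
  - apply Nat.eqb_eq in E; subst. rewrite Rmult_1_r. apply derivable_pt_lim_sin.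
  - rewrite Rmult_0_r. apply derivable_pt_lim_const.
Qed.

Lemma d_wfrom r th n j k :
  derivable_pt_lim (fun t => wfrom r (upd th j t) n k) (th j) (dwf r th n j k).
Proof.
  induction k as [|k IH].
  - simpl. apply derivable_pt_lim_const.
  - pose proof (derivable_pt_lim_plus _ _ _ _ _ (derivable_pt_lim_const (r (n - k - 2)%nat) (th j))
       (derivable_pt_lim_mult _ _ _ _ _ IH (d_cos_upd th j (n - k - 1)%nat))) as H.
    unfold plus_fct, mult_fct, fct_cte in H. rewrite upd_same in H.
    replace (dwf r th n j (S k)) with
      (0 + (dwf r th n j k * cos (th (n - k - 1)%nat) +
            wfrom r th n k * (- sin (th (n - k - 1)%nat) * ind j (n - k - 1)))) by (simpl; ring).
    exact H.
Qed.

Lemma d_xcoord r th n j i :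
  derivable_pt_lim (fun t => xcoord r (upd th j t) n i) (th j) (dx r th n j i).
Proof.
  unfold xcoord, dx, w, dw. destruct (Nat.eqb i 1).
  - pose proof (derivable_pt_lim_mult _ _ _ _ _ (d_wfrom r th n j (n-2)) (d_cos_upd th j 1)) as H.
    unfold mult_fct in H. rewrite upd_same in H. exact H.
  - pose proof (derivable_pt_lim_mult _ _ _ _ _ (d_wfrom r th n j (n-i)) (d_sin_upd th j (i-1))) as H.
    unfold mult_fct in H. rewrite upd_same in H. exact H.
Qed.

Lemma w_rec r th n i : (1 <= i < n)%nat ->
  w r th n i = r (i - 1)%nat + w r th n (S i) * cos (th i).
Proof.
  intros Hi. unfold w. replace (n - i)%nat with (S (n - S i)) by lia. simpl.
  replace (n - (n - S i) - 2)%nat with (i - 1)%nat by lia.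
  replace (n - (n - S i) - 1)%nat with i by lia. reflexivity.
Qed.

Lemma w_n r th n : w r th n n = r (n - 1)%nat.
Proof. unfold w. rewrite Nat.sub_diag. reflexivity. Qed.

Lemma dw_rec r th n j i : (1 <= i < n)%nat ->
  dw r th n j i = dw r th n j (S i) * cos (th i) + w r th n (S i) * (- sin (th i) * ind j i).
Proof.
  intros Hi. unfold dw, w. replace (n - i)%nat with (S (n - S i)) by lia. simpl.
  replace (n - (n - S i) - 1)%nat with i by lia. reflexivity.
Qed.

Lemma wfrom_neg r th n k : wfrom r (fun j => - th j) n k = wfrom r th n k.
Proof. induction k; simpl; [reflexivity|]. rewrite IHk, cos_neg. reflexivity. Qed.

Lemma tail_sum_last r n : tail_sum r n (n - 1) = 0.
Proof. unfold tail_sum. replace (n - 1 - (n - 1))%nat with 0%nat by lia. reflexivity. Qed.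

Lemma tail_sum_step r n i : (S i <= n - 1)%nat -> tail_sum r n i = r (S i) + tail_sum r n (S i).
Proof. intros H. unfold tail_sum. replace (n - 1 - i)%nat with (S (n - 1 - S i)) by lia.
  reflexivity. Qed.
Definition FS (l : list nat) (f : nat -> R) := fold_right Rplus 0 (map f l).

Lemma FS_ext l f g : (forall j, f j = g j) -> FS l f = FS l g.
Proof. intros H. unfold FS. rewrite (map_ext f g H). reflexivity. Qed.

Lemma FS_lin l f g a b : FS l (fun j => f j * a + b * g j) = FS l f * a + b * FS l g.
Proof. induction l; unfold FS in *; simpl; [ring|]. rewrite IHl. ring. Qed.

Lemma FS_ind0 s len c k : (k < s)%nat -> FS (seq s len) (fun j => c j * ind j k) = 0.
Proof.
  revert s; induction len; intros s Hs; unfold FS in *; simpl; [reflexivity|].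
  rewrite IHlen by lia. unfold ind. destruct (Nat.eqb k s) eqn:E.
  - apply Nat.eqb_eq in E; lia.
  - ring.
Qed.

Lemma FS_ind s len c k : (s <= k < s + len)%nat -> FS (seq s len) (fun j => c j * ind j k) = c k.
Proof.
  revert s; induction len; intros s Hs; [lia|]. unfold FS in *; simpl.
  unfold ind at 1. destruct (Nat.eqb k s) eqn:E.
  - apply Nat.eqb_eq in E; subst. pose proof (FS_ind0 (S s) len c s ltac:(lia)) as H0.
    unfold FS in H0. rewrite H0. ring.
  - apply Nat.eqb_neq in E. rewrite IHlen by lia. ring.
Qed.

Lemma w_bounds r th n (hn : (2 <= n)%nat)
  (hpos : forall i, (1 <= i <= n - 1)%nat -> 0 < r i)
  (hdom : forall i, (1 <= i <= n - 1)%nat -> r i > tail_sum r n i) :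
  forall m i, (i + m = n - 1)%nat -> (1 <= i)%nat ->
  r i - tail_sum r n i <= w r th n (S i) <= r i + tail_sum r n i.
Proof.
  induction m; intros i Hm Hi.
  - replace i with (n - 1)%nat by lia. rewrite tail_sum_last.
    replace (S (n - 1)) with n by lia. rewrite w_n. lra.
  - pose proof (IHm (S i) ltac:(lia) ltac:(lia)) as IH.
    rewrite (tail_sum_step r n i) by lia.
    rewrite (w_rec r th n (S i)) by lia. replace (S i - 1)%nat with i by lia.
    pose proof (hdom (S i) ltac:(lia)). pose proof (COS_bound (th (S i))).
    assert (0 < w r th n (S (S i))) by lra.
    nra.
Qed.

Lemma w_pos r th n (hn : (2 <= n)%nat)
  (hpos : forall i, (1 <= i <= n - 1)%nat -> 0 < r i)
  (hdom : forall i, (1 <= i <= n - 1)%nat -> r i > tail_sum r n i) :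
  forall i, (1 <= i <= n - 1)%nat -> 0 < w r th n (S i).
Proof.
  intros i Hi. pose proof (w_bounds r th n hn hpos hdom (n - 1 - i) i ltac:(lia) ltac:(lia)).
  pose proof (hdom i Hi). lra.
Qed.

Lemma lin_indep r th n (hn : (2 <= n)%nat)
  (hpos : forall i, (1 <= i <= n - 1)%nat -> 0 < r i)
  (hdom : forall i, (1 <= i <= n - 1)%nat -> r i > tail_sum r n i) (c : nat -> R) :
  (forall i, (1 <= i <= n)%nat ->
     fold_right Rplus 0 (map (fun j => c j * dx r th n j i) (seq 1 (n - 1))) = 0) ->
  forall j, (1 <= j <= n - 1)%nat -> c j = 0.
Proof.
  intros hc.
  set (l := seq 1 (n - 1)).
  assert (hc' : forall i, (1 <= i <= n)%nat -> FS l (fun j => c j * dx r th n j i) = 0) by exact hc.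
  clear hc. rename hc' into hc.
  set (W := fun i => FS l (fun j => c j * dw r th n j i)).
  assert (X1 : W 1%nat = 0).
  { rewrite <- (hc 1%nat ltac:(lia)). unfold W. apply FS_ext. intro j.
    unfold dx. simpl Nat.eqb. cbv iota. rewrite (dw_rec r th n j 1) by lia. reflexivity. }
  assert (Wk : forall k, (1 <= k <= n - 1)%nat ->
     W k = W (S k) * cos (th k) + (w r th n (S k) * - sin (th k)) * c k).
  { intros k Hk. unfold W.
    rewrite (FS_ext l _ (fun j => (c j * dw r th n j (S k)) * cos (th k)
                 + (w r th n (S k) * - sin (th k)) * (c j * ind j k))).
    - rewrite FS_lin. unfold l. rewrite FS_ind by lia. reflexivity.
    - intro j. rewrite (dw_rec r th n j k) by lia. ring. }
  assert (Xk : forall k, (1 <= k <= n - 1)%nat ->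
     W (S k) * sin (th k) + (w r th n (S k) * cos (th k)) * c k = 0).
  { intros k Hk. rewrite <- (hc (S k) ltac:(lia)). unfold W.
    rewrite (FS_ext l (fun j => c j * dx r th n j (S k))
                 (fun j => (c j * dw r th n j (S k)) * sin (th k)
                 + (w r th n (S k) * cos (th k)) * (c j * ind j k))).
    - rewrite FS_lin. unfold l. rewrite FS_ind by lia. reflexivity.
    - intro j. unfold dx. assert (E: Nat.eqb (S k) 1 = false) by (apply Nat.eqb_neq; lia).
      rewrite E. replace (S k - 1)%nat with k by lia. ring. }
  assert (step : forall k, (1 <= k <= n - 1)%nat -> W k = 0 -> c k = 0 /\ W (S k) = 0).
  { intros k Hk H0. pose proof (Wk k Hk) as e1. pose proof (Xk k Hk) as e2.
    pose proof (w_pos r th n hn hpos hdom k Hk) as wp.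
    pose proof (sin2_cos2 (th k)) as sc. unfold Rsqr in sc.
    set (A := W (S k)) in *. set (p := w r th n (S k)) in *.
    set (s := sin (th k)) in *. set (co := cos (th k)) in *.
    assert (hp : p * c k = 0).
    { transitivity (co * (A * s + p * co * c k) - s * (A * co + p * - s * c k)).
      - transitivity (p * c k * (s * s + co * co)); [rewrite sc|]; ring.
      - rewrite e2, <- e1, H0. ring. }
    split.
    - apply Rmult_integral in hp. destruct hp; [lra|assumption].
    - transitivity (s * (A * s + p * co * c k) + co * (A * co + p * - s * c k)).
      + transitivity (A * (s * s + co * co)); [rewrite sc|]; ring.
      + rewrite e2, <- e1, H0. ring. }
  assert (allW : forall m, (S m <= n - 1)%nat -> W (S m) = 0).
  { induction m; intros Hm; [exact X1|].
    apply (step (S m) ltac:(lia)). apply IHm. lia. }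
  intros j Hj. destruct j as [|m]; [lia|].
  apply (step (S m) Hj). apply allW. lia.
Qed.
Fixpoint Bd (r : nat -> R) (n k : nat) : R :=
  match k with O => Rabs (r (n - 1)%nat) | S k' => Rabs (r (n - k' - 2)%nat) + Bd r n k' end.
Fixpoint Lp (r : nat -> R) (n k : nat) : R :=
  match k with O => 0 | S k' => Lp r n k' + Bd r n k' end.

Lemma Bd_nonneg r n k : 0 <= Bd r n k.
Proof. induction k; simpl; [apply Rabs_pos|]. pose proof (Rabs_pos (r (n - k - 2)%nat)); lra. Qed.
Lemma Lp_nonneg r n k : 0 <= Lp r n k.
Proof. induction k; simpl; [lra|]. pose proof (Bd_nonneg r n k). lra. Qed.
Lemma Bd_mono r n k m : (k <= m)%nat -> Bd r n k <= Bd r n m.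
Proof. induction 1; [lra|]. simpl. pose proof (Rabs_pos (r (n - m - 2)%nat)). lra. Qed.
Lemma Lp_mono r n k m : (k <= m)%nat -> Lp r n k <= Lp r n m.
Proof. induction 1; [lra|]. simpl. pose proof (Bd_nonneg r n m). lra. Qed.

Lemma wfrom_bound r th n k : Rabs (wfrom r th n k) <= Bd r n k.
Proof.
  induction k; simpl; [lra|].
  eapply Rle_trans; [apply Rabs_triang|]. rewrite Rabs_mult.
  pose proof (COS_bound (th (n - k - 1)%nat)).
  assert (Rabs (cos (th (n - k - 1)%nat)) <= 1) by (apply Rabs_le; lra).
  pose proof (Rabs_pos (wfrom r th n k)). pose proof (Rabs_pos (cos (th (n - k - 1)%nat))).
  nra.
Qed.

Lemma wfrom_lip r n th th' d : 0 <= d ->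
  (forall j, (1 <= j <= n - 1)%nat -> Rabs (th' j - th j) <= d) ->
  forall k, (k <= n - 2)%nat -> Rabs (wfrom r th' n k - wfrom r th n k) <= Lp r n k * d.
Proof.
  intros hd hth. induction k; intros hk; simpl.
  - rewrite Rminus_diag, Rabs_R0. lra.
  - set (a := th' (n - k - 1)%nat). set (b := th (n - k - 1)%nat).
    replace (r (n - k - 2)%nat + wfrom r th' n k * cos a - (r (n - k - 2)%nat + wfrom r th n k * cos b))
      with ((wfrom r th' n k - wfrom r th n k) * cos a + wfrom r th n k * (cos a - cos b)) by ring.
    eapply Rle_trans; [apply Rabs_triang|]. rewrite !Rabs_mult.
    pose proof (IHk ltac:(lia)).
    pose proof (COS_bound a).
    assert (Rabs (cos a) <= 1) by (apply Rabs_le; lra).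
    pose proof (cos_lip a b). pose proof (hth (n - k - 1)%nat ltac:(lia)). fold a b in H3.
    pose proof (wfrom_bound r th n k).
    pose proof (Rabs_pos (wfrom r th' n k - wfrom r th n k)).
    pose proof (Rabs_pos (wfrom r th n k)). pose proof (Rabs_pos (cos a)).
    pose proof (Rabs_pos (cos a - cos b)).
    nra.
Qed.

Lemma continuity_part r n (hn : (2 <= n)%nat) :
  forall th eps, 0 < eps -> exists delta, 0 < delta /\
     forall th', (forall j, (1 <= j <= n - 1)%nat -> Rabs (th' j - th j) < delta) ->
     forall i, (1 <= i <= n)%nat -> Rabs (xcoord r th' n i - xcoord r th n i) < eps.
Proof.
  intros th eps he.
  set (M := Lp r n n + Bd r n n + 1).
  assert (hM : 1 <= M) by (unfold M; pose proof (Lp_nonneg r n n); pose proof (Bd_nonneg r n n); lra).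
  exists (eps / M). split; [apply Rdiv_lt_0_compat; lra|].
  intros th' hth i hi.
  assert (hd : 0 <= eps / M) by (apply Rlt_le, Rdiv_lt_0_compat; lra).
  assert (hth' : forall j, (1 <= j <= n - 1)%nat -> Rabs (th' j - th j) <= eps / M)
    by (intros j hj; apply Rlt_le, hth, hj).
  assert (key : forall k a, (k <= n - 2)%nat -> (1 <= a <= n - 1)%nat ->
      (forall f, f = cos \/ f = sin -> Rabs (wfrom r th' n k * f (th' a) - wfrom r th n k * f (th a)) < eps)).
  { intros k a hk ha f hf.
    replace (wfrom r th' n k * f (th' a) - wfrom r th n k * f (th a))
      with ((wfrom r th' n k - wfrom r th n k) * f (th' a) + wfrom r th n k * (f (th' a) - f (th a))) by ring.
    eapply Rle_lt_trans; [apply Rabs_triang|]. rewrite !Rabs_mult.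
    assert (Rabs (f (th' a)) <= 1).
    { destruct hf; subst; apply Rabs_le; [pose proof (COS_bound (th' a))|pose proof (SIN_bound (th' a))]; lra. }
    assert (Rabs (f (th' a) - f (th a)) <= eps / M).
    { eapply Rle_trans; [|apply (hth' a ha)]. destruct hf; subst; [apply cos_lip|apply sin_lip]. }
    pose proof (wfrom_lip r n th th' (eps/M) hd hth' k hk).
    pose proof (wfrom_bound r th n k).
    pose proof (Lp_mono r n k n ltac:(lia)). pose proof (Bd_mono r n k n ltac:(lia)).
    pose proof (Lp_nonneg r n k). pose proof (Bd_nonneg r n k).
    pose proof (Rabs_pos (wfrom r th' n k - wfrom r th n k)).
    pose proof (Rabs_pos (wfrom r th n k)). pose proof (Rabs_pos (f (th' a))).
    pose proof (Rabs_pos (f (th' a) - f (th a))).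
    assert (M * (eps / M) = eps) by (field; lra).
    assert ((Lp r n n + Bd r n n) * (eps / M) < eps) by (unfold M in *; nra).
    nra. }
  unfold xcoord, w. destruct (Nat.eqb i 1) eqn:E.
  - apply (key (n - 2)%nat 1%nat); [lia|lia|auto].
  - apply Nat.eqb_neq in E. apply (key (n - i)%nat (i - 1)%nat); [lia|lia|auto].
Qed.

Lemma inj_part r n (hn : (2 <= n)%nat)
  (hpos : forall i, (1 <= i <= n - 1)%nat -> 0 < r i)
  (hdom : forall i, (1 <= i <= n - 1)%nat -> r i > tail_sum r n i) :
  forall th th', (forall i, (1 <= i <= n)%nat -> xcoord r th n i = xcoord r th' n i) ->
     forall j, (1 <= j <= n - 1)%nat -> exists k : Z, th' j = th j + 2 * IZR k * PI.
Proof.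
  intros th th' hx.
  assert (pair : forall j, (1 <= j <= n - 1)%nat -> (j = 1%nat \/ w r th n j = w r th' n j) ->
     w r th n (S j) = w r th' n (S j) /\ exists k : Z, th' j = th j + 2 * IZR k * PI).
  { intros j hj hor. apply polar.
    - apply (w_pos r th n hn hpos hdom j hj).
    - apply (w_pos r th' n hn hpos hdom j hj).
    - destruct hor as [->|he].
      + pose proof (hx 1%nat ltac:(lia)) as h. unfold xcoord in h. simpl Nat.eqb in h. exact h.
      + rewrite (w_rec r th n j), (w_rec r th' n j) in he by lia. lra.
    - pose proof (hx (S j) ltac:(lia)) as h. unfold xcoord in h.
      assert (E: Nat.eqb (S j) 1 = false) by (apply Nat.eqb_neq; lia).
      rewrite E in h. replace (S j - 1)%nat with j in h by lia. exact h. }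
  assert (allw : forall m, (1 <= m <= n - 1)%nat -> w r th n (S m) = w r th' n (S m)).
  { induction m; intros hm; [lia|].
    destruct m as [|m'].
    - apply (pair 1%nat ltac:(lia)). auto.
    - apply (pair (S (S m')) ltac:(lia)). right. apply IHm. lia. }
  intros j hj. destruct j as [|m]; [lia|]. apply (pair (S m) hj).
  destruct m; [auto|]. right. apply allw. lia.
Qed.

Theorem mainTheorem11 (n : nat) (hn : (2 <= n)%nat) (r : nat -> R)
  (hpos : forall i, (1 <= i <= n - 1)%nat -> 0 < r i)
  (hdom : forall i, (1 <= i <= n - 1)%nat -> r i > tail_sum r n i) :
  (* continuity of theta |-> x(theta) (on R^{n-1}, hence on the torus) *)
  (forall th eps, 0 < eps -> exists delta, 0 < delta /\
     forall th', (forall j, (1 <= j <= n - 1)%nat -> Rabs (th' j - th j) < delta) ->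
     forall i, (1 <= i <= n)%nat -> Rabs (xcoord r th' n i - xcoord r th n i) < eps) /\
  (* injectivity on the torus T^{n-1} = (R / 2 pi Z)^{n-1} *)
  (forall th th', (forall i, (1 <= i <= n)%nat -> xcoord r th n i = xcoord r th' n i) ->
     forall j, (1 <= j <= n - 1)%nat -> exists k : Z, th' j = th j + 2 * IZR k * PI) /\
  (* immersion: the partial derivatives exist and are linearly independent *)
  (forall th, exists D : nat -> nat -> R,
     (forall j i, (1 <= j <= n - 1)%nat -> (1 <= i <= n)%nat ->
        derivable_pt_lim (fun t => xcoord r (upd th j t) n i) (th j) (D j i)) /\
     (forall c : nat -> R,
        (forall i, (1 <= i <= n)%nat ->
           fold_right Rplus 0 (map (fun j => c j * D j i) (seq 1 (n - 1))) = 0) ->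
        forall j, (1 <= j <= n - 1)%nat -> c j = 0)) /\
  (* symmetries *)
  (forall th, xcoord r (fun j => - th j) n 1 = xcoord r th n 1) /\
  (forall th i, (2 <= i <= n)%nat -> xcoord r (fun j => - th j) n i = - xcoord r th n i).
Proof.
  split; [apply continuity_part; exact hn|].
  split; [apply inj_part; assumption|].
  split.
  { intro th. exists (dx r th n). split.
    - intros j i _ _. apply d_xcoord.
    - intros c hc. apply (lin_indep r th n hn hpos hdom c hc). }
  split.
  - intro th. unfold xcoord, w. simpl Nat.eqb. cbv iota. rewrite wfrom_neg, cos_neg. reflexivity.
  - intros th i hi. unfold xcoord, w.
    assert (E: Nat.eqb i 1 = false) by (apply Nat.eqb_neq; lia). rewrite E.
    rewrite wfrom_neg, sin_neg. ring.
Qed.
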